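(* Let $d\in\mathbb{N}$ and $\beta_1,\ldots,\beta_d\in\mathbb{R}$. The multi-indexed sequence $$\bar F_{n_1,\ldots,n_d}=\prod_{k=1}^d\beta_k^{n_{(d-k+1)}-n_{(d-k)}},\qquad n_1,\ldots,n_d\in\mathbb{N}_0,$$ is a $d$-dimensional discrete survival function (i.e. there is an $\mathbb{N}^d$-valued random vector $(\tau_1,\ldots,\tau_d)$ with $\bar F_{n_1,\ldots,n_d}=\mathbb{P}(\tau_1>n_1,\ldots,\tau_d>n_d)$ for all $n_i\in\mathbb{N}_0$) if and only if $(1,\beta_1,\ldots,\beta_d)\in\mathcal{M}_{d+1}$. In that case it is the survival function of an exchangeable $d$-variate wide-sense geometric law.
   Context: $\mathbb{N}=\{1,2,\ldots\}$, $\mathbb{N}_0=\{0\}\cup\mathbb{N}$; $n_{(0)}:=0\le n_{(1)}\le\cdots\le n_{(d)}$ is the ordered list of $n_1,\ldots,n_d$; $0^0:=1$. $\nabla^jx_k:=\sum_{i=0}^j(-1)^i\binom{j}{i}x_{k+i}$. $\mathcal{M}_{d+1}$ is the set of $(x_0,\ldots,x_d)\in\mathbb{R}^{d+1}$ with $x_0=1$, $x_1<1$, and $\nabla^jx_k\ge0$ for $k=0,\ldots,d$, $j=0,\ldots,d-k$. Wide-sense geometric law: for $\tilde p_I\in[0,1]$, $I\subseteq\{1,\ldots,d\}$, $\sum_I\tilde p_I=1$, $\sum_{I\not\ni k}\tilde p_I<1$ for all $k$, run i.i.d. trials with outcome $I$ of probability $\tilde p_I$, let $\tilde E_I$ be the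 first trial with outcome $I$, and $\tau_k=\min\{\tilde E_I:k\in I\}$. *)

(* Defs.v *)
From Stdlib Require Import Reals Lra Lia Arith List.
From Stdlib Require Import Sorting.Mergesort.
Import ListNotations.
Open Scope R_scope.

(* Conventions: dimension d; multi-indices n : nat -> nat with coordinates
   n 1, ..., n d (values at other indices are ignored); likewise beta 1..beta d. *)

Fixpoint sumR (N : nat) (f : nat -> R) : R :=
  match N with O => 0 | S N' => sumR N' f + f N' end.

Fixpoint prodR (N : nat) (f : nat -> R) : R :=
  match N with O => 1 | S N' => prodR N' f * f N' end.

Definition sorted_coords (d : nat) (n : nat -> nat) : list nat :=
  NatSort.sort (map n (seq 1 d)).

Definition ord_stat (d : nat) (n : nat -> nat) (j : nat) : nat :=
  match j with O => O | S j' => nth j' (sorted_coords d n) O end.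

(* Fbar_{n_1..n_d} = prod_{k=1}^d beta_k ^ (n_(d-k+1) - n_(d-k))   (0^0 = 1) *)
Definition Fbar (d : nat) (beta : nat -> R) (n : nat -> nat) : R :=
  prodR d (fun i => let k := S i in
     beta k ^ (ord_stat d n (d - k + 1) - ord_stat d n (d - k))%nat).

Definition nabla (j : nat) (x : nat -> R) (k : nat) : R :=
  sum_f_R0 (fun i => (-1) ^ i * C j i * x (k + i)%nat) j.

Definition InM (d : nat) (x : nat -> R) : Prop :=
  x 0%nat = 1 /\ x 1%nat < 1 /\
  forall k j, (k <= d)%nat -> (j <= d - k)%nat -> 0 <= nabla j x k.

Definition upd (v : nat -> nat) (k t : nat) : nat -> nat :=
  fun i => if Nat.eqb i k then t else v i.

(* boxsum d lo M g = sum of g v over all v with lo_i < v_i <= M for i = 1..d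
   (and v_i = 0 for the irrelevant indices i outside 1..d). *)
Fixpoint boxsum (k : nat) (lo : nat -> nat) (M : nat)
  (g : (nat -> nat) -> R) : R :=
  match k with
  | O => g (fun _ => O)
  | S k' => sumR M (fun t => if Nat.leb (lo k) t
                             then boxsum k' lo M (fun v => g (upd v k (S t)))
                             else 0)
  end.

(* S is a d-dimensional discrete survival function: there is a probability
   mass function p on N^d = {1,2,...}^d (the law of an N^d-valued random
   vector tau) with S n = P(tau_1 > n_1, ..., tau_d > n_d) for all n in N_0^d.
   Countable sums over N^d are taken as limits of sums over boxes
   (all terms are nonnegative). *)
Definition IsDiscreteSurvival (d : nat) (S : (nat -> nat) -> R) : Prop :=
  exists p : (nat -> nat) -> R,
    (forall v, 0 <= p v) /\
    Un_cv (fun M => boxsum d (fun _ => O) M p) 1 /\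
    forall n : nat -> nat, Un_cv (fun M => boxsum d n M p) (S n).

(* Subsets I of {1..d} are encoded by masks m < 2^d:  k \in I  iff
   Nat.testbit m (k-1). *)
Definition inI (m k : nat) : bool := Nat.testbit m (k - 1).

Definition sumSubsets (d : nat) (P : nat -> bool) (f : nat -> R) : R :=
  sumR (2 ^ d) (fun m => if P m then f m else 0).

Definition all_coords (d : nat) (q : nat -> bool) : bool :=
  forallb q (seq 1 d).

Definition WSGParams (d : nat) (pt : nat -> R) : Prop :=
  (forall m, (m < 2 ^ d)%nat -> 0 <= pt m <= 1) /\
  sumSubsets d (fun _ => true) pt = 1 /\
  forall k, (1 <= k <= d)%nat ->
    sumSubsets d (fun m => negb (inI m k)) pt < 1.

Definition maxcoord (d : nat) (n : nat -> nat) : nat :=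
  fold_right Nat.max O (map n (seq 1 d)).

(* Survival function P(tau_1 > n_1, ..., tau_d > n_d) of the wide-sense
   geometric law: tau_k > n_k for all k iff for every trial t = 1,2,...
   the outcome I of trial t avoids {k : n_k >= t}; trials are i.i.d., so this
   is the product over t = 1..max_k n_k of the probability of that event. *)
Definition WSG_surv (d : nat) (pt : nat -> R) (n : nat -> nat) : R :=
  prodR (maxcoord d n) (fun t0 =>
    sumSubsets d
      (fun m => all_coords d (fun k => implb (Nat.leb (S t0) (n k))
                                              (negb (inI m k))))
      pt).

Definition IsPerm (d : nat) (sigma : nat -> nat) : Prop :=
  (forall i, (1 <= i <= d)%nat -> (1 <= sigma i <= d)%nat) /\
  (forall i j, (1 <= i <= d)%nat -> (1 <= j <= d)%nat ->
     sigma i = sigma j -> i = j).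

(* the law with survival function S is exchangeable: the joint law of
   (tau_{sigma 1}, ..., tau_{sigma d}) equals that of (tau_1,...,tau_d) for
   every permutation sigma (laws on N^d are determined by survival functions) *)
Definition Exchangeable (d : nat) (S : (nat -> nat) -> R) : Prop :=
  forall sigma, IsPerm d sigma ->
    forall n : nat -> nat,
      S (fun i => n (sigma i)) = S n.

(* Main.v *)
Require Import Defs.
From Stdlib Require Import Reals.
From Stdlib Require Import Reals Lra Lia Arith List Permutation Sorted.
From Stdlib Require Import Sorting.Mergesort.
Import ListNotations.
Open Scope R_scope.

Lemma sumR_ext N f g : (forall i, (i < N)%nat -> f i = g i) -> sumR N f = sumR N g.
Proof. induction N; simpl; intros H; auto. rewrite IHN by (intros; apply H; lia). rewrite H by lia. auto. Qed.

Lemma prodR_ext N f g : (forall i, (i < N)%nat -> f i = g i) -> prodR N f = prodR N g.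
Proof. induction N; simpl; intros H; auto. rewrite IHN by (intros; apply H; lia). rewrite H by lia. auto. Qed.

Lemma sumR_plus N f g : sumR N (fun i => f i + g i) = sumR N f + sumR N g.
Proof. induction N; simpl; [lra|rewrite IHN; lra]. Qed.

Lemma sumR_minus N f g : sumR N (fun i => f i - g i) = sumR N f - sumR N g.
Proof. induction N; simpl; [lra|rewrite IHN; lra]. Qed.

Lemma sumR_scal N c f : sumR N (fun i => c * f i) = c * sumR N f.
Proof. induction N; simpl; [lra|rewrite IHN; lra]. Qed.

Lemma sumR_zero N : sumR N (fun _ => 0) = 0.
Proof. induction N; simpl; [lra|rewrite IHN; lra]. Qed.

Lemma sumR_shift N f : sumR (S N) f = f O + sumR N (fun i => f (S i)).
Proof. induction N; simpl in *; [lra|]. rewrite IHN. lra. Qed.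

Lemma prodR_shift N f : prodR (S N) f = f O * prodR N (fun i => f (S i)).
Proof. induction N; simpl in *; [lra|]. rewrite IHN. lra. Qed.

Lemma sumR_add N K f : sumR (N + K) f = sumR N f + sumR K (fun i => f (N + i)%nat).
Proof. induction K; simpl. rewrite Nat.add_0_r; lra. rewrite Nat.add_succ_r; simpl. rewrite IHK; lra. Qed.

Lemma prodR_add N K f : prodR (N + K) f = prodR N f * prodR K (fun i => f (N + i)%nat).
Proof. induction K; simpl. rewrite Nat.add_0_r; lra. rewrite Nat.add_succ_r; simpl. rewrite IHK; lra. Qed.

Lemma sumR_nonneg N f : (forall i, (i < N)%nat -> 0 <= f i) -> 0 <= sumR N f.
Proof. induction N; simpl; intros H; [lra|]. assert (0 <= sumR N f) by (apply IHN; intros; apply H; lia). specialize (H N ltac:(lia)). lra. Qed.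
Lemma sumR_le N f g : (forall i, (i < N)%nat -> f i <= g i) -> sumR N f <= sumR N g.
Proof. induction N; simpl; intros H; [lra|]. assert (sumR N f <= sumR N g) by (apply IHN; intros; apply H; lia). specialize (H N ltac:(lia)). lra. Qed.

Lemma sumR_term_le N f j : (forall i, (i < N)%nat -> 0 <= f i) -> (j < N)%nat -> f j <= sumR N f.
Proof. induction N; simpl; intros H Hj; [lia|].
  assert (0 <= sumR N f) by (apply sumR_nonneg; intros; apply H; lia).
  destruct (Nat.eq_dec j N). subst. lra.
  assert (f j <= sumR N f) by (apply IHN; [intros; apply H; lia|lia]). specialize (H N ltac:(lia)). lra. Qed.

Lemma prodR_nonneg N f : (forall i, (i < N)%nat -> 0 <= f i) -> 0 <= prodR N f.
Proof. induction N; simpl; intros H; [lra|]. apply Rmult_le_pos. apply IHN; intros; apply H; lia. apply H; lia. Qed.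

Fixpoint Cb (n k : nat) : R :=
  match n, k with
  | O, O => 1
  | O, S _ => 0
  | S _, O => 1
  | S n', S k' => Cb n' k' + Cb n' (S k')
  end.

Lemma Cb_big n k : (n < k)%nat -> Cb n k = 0.
Proof. revert k; induction n; intros [|k] H; simpl; try lia; auto.
  rewrite !IHn by lia. lra. Qed.

Lemma Cb_nn n : Cb n n = 1.
Proof. induction n; simpl; auto. rewrite IHn, Cb_big by lia. lra. Qed.

Lemma Cb_n0 n : Cb n 0 = 1.
Proof. destruct n; reflexivity. Qed.

Lemma Cb_ge1 n k : (k <= n)%nat -> 1 <= Cb n k.
Proof. revert k; induction n; intros [|k] H; simpl; try lia; try lra.
  assert (0 <= Cb n (S k)). { destruct (Nat.lt_ge_cases n (S k)). rewrite Cb_big by lia; lra. specialize (IHn (S k) H0); lra. }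
  specialize (IHn k ltac:(lia)). lra. Qed.

Lemma Cb_nonneg n k : 0 <= Cb n k.
Proof. destruct (Nat.lt_ge_cases n k). rewrite Cb_big by lia; lra. specialize (Cb_ge1 n k H); lra. Qed.

Lemma C_n0 n : C n 0 = 1.
Proof. unfold C. rewrite Nat.sub_0_r. simpl. field. apply INR_fact_neq_0. Qed.
Lemma C_nn n : C n n = 1.
Proof. unfold C. rewrite Nat.sub_diag. simpl. field. apply INR_fact_neq_0. Qed.

Lemma Cb_C n k : (k <= n)%nat -> Cb n k = C n k.
Proof. revert k; induction n; intros [|k] H; try lia.
  - cbn [Cb]. rewrite C_n0. auto.
  - rewrite Cb_n0, C_n0. auto.
  - cbn [Cb]. destruct (Nat.eq_dec k n). subst. rewrite Cb_nn, (Cb_big n (S n)), C_nn by lia. lra.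
    rewrite IHn, IHn by lia. apply pascal. lia. Qed.

Definition binsum (r : nat) (f : nat -> R) : R := sumR (S r) (fun i => Cb r i * f i).

Lemma binsum_S r f : binsum (S r) f = binsum r f + binsum r (fun i => f (S i)).
Proof. unfold binsum. rewrite sumR_shift. rewrite Cb_n0.
  rewrite (sumR_ext (S r) _ (fun i => Cb r i * f (S i) + Cb r (S i) * f (S i))) by (intros; simpl; lra).
  rewrite sumR_plus. 
  assert (sumR (S (S r)) (fun i => Cb r i * f i) = 1 * f O + sumR (S r) (fun i => Cb r (S i) * f (S i))).
  { rewrite sumR_shift. rewrite Cb_n0. auto. }
  assert (sumR (S (S r)) (fun i => Cb r i * f i) = sumR (S r) (fun i => Cb r i * f i)).
  { simpl sumR at 1. rewrite (Cb_big r (S r)) by lia. simpl. lra. }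
  lra. Qed.

Lemma binsum_ext r f g : (forall i, (i <= r)%nat -> f i = g i) -> binsum r f = binsum r g.
Proof. intros H; unfold binsum; apply sumR_ext; intros; rewrite H by lia; auto. Qed.

Lemma binsum_minus r f g : binsum r (fun i => f i - g i) = binsum r f - binsum r g.
Proof. unfold binsum. rewrite <- sumR_minus. apply sumR_ext; intros; lra. Qed.

Lemma sum_f_R0_sumR f n : sum_f_R0 f n = sumR (S n) f.
Proof. induction n as [|n IHn]. simpl; lra. change (sum_f_R0 f (S n)) with (sum_f_R0 f n + f (S n)). rewrite IHn. reflexivity. Qed.

Definition nab (j : nat) (x : nat -> R) (k : nat) : R :=
  sumR (S j) (fun i => (-1) ^ i * Cb j i * x (k + i)%nat).

Lemma nabla_nab j x k : nabla j x k = nab j x k.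
Proof. unfold nabla, nab. rewrite sum_f_R0_sumR. apply sumR_ext. intros. rewrite Cb_C by lia. auto. Qed.

Lemma nab_0 x k : nab 0 x k = x k.
Proof. unfold nab. simpl. rewrite Nat.add_0_r. lra. Qed.

Lemma nab_S j x k : nab (S j) x k = nab j x k - nab j x (S k).
Proof. unfold nab.
  rewrite sumR_shift. rewrite Cb_n0, Nat.add_0_r.
  rewrite (sumR_ext (S j) _ (fun i => - ((-1) ^ i * Cb j i * x (S k + i)%nat) + (-1)^(S i) * Cb j (S i) * x (k + S i)%nat)).
  2:{ intros. simpl Cb. replace (S k + i)%nat with (k + S i)%nat by lia. simpl pow. lra. }
  rewrite sumR_plus.
  rewrite (sumR_ext (S j) (fun i => - _) (fun i => (-1) * ((-1) ^ i * Cb j i * x (S k + i)%nat))) by (intros; lra).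
  rewrite sumR_scal.
  assert (E : sumR (S (S j)) (fun i => (-1) ^ i * Cb j i * x (k + i)%nat)
     = 1 * 1 * x (k+0)%nat + sumR (S j) (fun i => (-1) ^ S i * Cb j (S i) * x (k + S i)%nat)).
  { rewrite sumR_shift. rewrite Cb_n0. auto. }
  assert (E2 : sumR (S (S j)) (fun i => (-1) ^ i * Cb j i * x (k + i)%nat)
     = sumR (S j) (fun i => (-1) ^ i * Cb j i * x (k + i)%nat)).
  { simpl sumR at 1. rewrite (Cb_big j (S j)) by lia. simpl. lra. }
  rewrite Nat.add_0_r in E. lra. Qed.

Lemma binsum_nab x r D : (r <= D)%nat -> binsum r (fun i => nab i x (D - i)) = x (D - r)%nat.
Proof. revert D; induction r; intros D H.
  - unfold binsum. simpl. rewrite nab_0. rewrite Nat.sub_0_r. lra.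
  - rewrite binsum_S.
    rewrite (binsum_ext r (fun i => nab (S i) x (D - S i)) (fun i => nab i x ((D - 1) - i) - nab i x (D - i))).
    2:{ intros i Hi. rewrite nab_S. replace (S (D - S i)) with (D - i)%nat by lia. replace (D - 1 - i)%nat with (D - S i)%nat by lia. auto. }
    rewrite binsum_minus. rewrite IHr by lia. rewrite IHr by lia. replace (D - 1 - r)%nat with (D - S r)%nat by lia. lra. Qed.
Definition cnt (t : nat) (L : list nat) : nat := length (filter (fun y => Nat.ltb t y) L).
Definition maxL (L : list nat) : nat := fold_right Nat.max O L.
Definition G (b : nat -> R) (L : list nat) : R := prodR (maxL L) (fun t => b (cnt t L)).

Lemma cnt_perm t L L' : Permutation L L' -> cnt t L = cnt t L'.
Proof. unfold cnt. induction 1; simpl; auto.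
  destruct (t <? x); simpl; auto.
  destruct (t <? x), (t <? y); simpl; auto. lia. Qed.

Lemma maxL_perm L L' : Permutation L L' -> maxL L = maxL L'.
Proof. unfold maxL. induction 1; simpl; auto; lia. Qed.

Lemma G_perm b L L' : Permutation L L' -> G b L = G b L'.
Proof. intros H. unfold G. rewrite (maxL_perm _ _ H). apply prodR_ext. intros. rewrite (cnt_perm _ _ _ H). auto. Qed.

Lemma cnt_app t L1 L2 : cnt t (L1 ++ L2) = (cnt t L1 + cnt t L2)%nat.
Proof. unfold cnt. rewrite filter_app, length_app. auto. Qed.

Lemma cnt_zero t L : (forall y, In y L -> (y <= t)%nat) -> cnt t L = O.
Proof. unfold cnt. induction L; simpl; intros H; auto.
  assert (E: (t <? a) = false) by (apply Nat.ltb_ge; apply H; auto). rewrite E. apply IHL; auto. Qed.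

Lemma maxL_app L1 L2 : maxL (L1 ++ L2) = Nat.max (maxL L1) (maxL L2).
Proof. unfold maxL. induction L1; simpl; auto. rewrite IHL1. lia. Qed.

Lemma maxL_le L a : (forall y, In y L -> (y <= a)%nat) -> (maxL L <= a)%nat.
Proof. unfold maxL. induction L; simpl; intros H. lia. assert (a0 <= a)%nat by auto. assert (fold_right Nat.max 0%nat L <= a)%nat by auto. lia. Qed.

Lemma In_le_maxL L y : In y L -> (y <= maxL L)%nat.
Proof. unfold maxL. induction L; simpl; intros H. easy. destruct H. subst; lia. specialize (IHL H); lia. Qed.

Lemma prodR_const N c : prodR N (fun _ => c) = c ^ N.
Proof. induction N; simpl; auto. rewrite IHN. ring. Qed.

Lemma prodR_split N a f : (a <= N)%nat -> prodR N f = prodR a f * prodR (N - a) (fun i => f (a + i)%nat).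
Proof. intros H. replace N with (a + (N - a))%nat at 1 by lia. apply prodR_add. Qed.

Definition o (s : list nat) (j : nat) : nat := match j with O => O | S j' => nth j' s O end.

Lemma o_app s m j : (j <= length s)%nat -> o (s ++ [m]) j = o s j.
Proof. destruct j; simpl; auto. intros. rewrite app_nth1 by lia. auto. Qed.

Lemma o_last s m : o (s ++ [m]) (S (length s)) = m.
Proof. simpl. rewrite app_nth2 by lia. rewrite Nat.sub_diag. auto. Qed.

Definition Fo (b : nat -> R) (s : list nat) : R :=
  prodR (length s) (fun i => b (S i) ^ (o s (length s - i) - o s (length s - S i))).

Lemma SS_app_inv (s : list nat) m : StronglySorted le (s ++ [m]) ->
  StronglySorted le s /\ (forall y, In y s -> (y <= m)%nat).
Proof. induction s; simpl; intros H. split; [constructor|easy].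
  inversion H; subst. destruct (IHs H2) as [H4 H5]. split. constructor; auto.
  rewrite Forall_forall in *. intros; apply H3; apply in_or_app; auto.
  intros y [<-|Hy]; auto. rewrite Forall_forall in H3. apply H3. apply in_or_app; simpl; auto. Qed.

Lemma o_maxL s : StronglySorted le s -> o s (length s) = maxL s.
Proof. destruct s as [|a s'] using rev_ind; intros H. reflexivity.
  destruct (SS_app_inv _ _ H) as [_ H2]. rewrite length_app. simpl. rewrite Nat.add_1_r. rewrite o_last.
  rewrite maxL_app. simpl. assert (maxL s' <= a)%nat by (apply maxL_le; auto). lia. Qed.

Lemma Fo_G s : StronglySorted le s -> forall b, Fo b s = G b s.
Proof. induction s as [|m s IH] using rev_ind; intros H b. reflexivity.
  destruct (SS_app_inv _ _ H) as [H1 H2]. specialize (IH H1).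
  unfold Fo. rewrite length_app. simpl length. rewrite Nat.add_1_r. rewrite prodR_shift.
  rewrite Nat.sub_0_r, o_last. replace (S (length s) - 1)%nat with (length s) by lia.
  rewrite o_app by lia.
  rewrite (prodR_ext _ _ (fun i => (fun j => b (S j)) (S i) ^ (o s (length s - i) - o s (length s - S i)))).
  2:{ intros i Hi. replace (S (length s) - S i)%nat with (length s - i)%nat by lia.
      replace (S (length s) - S (S i))%nat with (length s - S i)%nat by lia.
      rewrite !o_app by lia. auto. }
  fold (Fo (fun j => b (S j)) s). rewrite IH.
  rewrite (o_maxL s H1).
  unfold G. rewrite maxL_app. simpl (maxL [m]). assert (Hm: (maxL s <= m)%nat) by (apply maxL_le; auto).
  replace (Nat.max (maxL s) (Nat.max m 0)) with m by lia.
  rewrite (prodR_split m (maxL s)) by exact Hm.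
  rewrite (prodR_ext (maxL s) (fun t => b (cnt t (s ++ [m]))) (fun t => b (S (cnt t s)))).
  2:{ intros. rewrite cnt_app. unfold cnt at 2. simpl. replace (i <? m) with true by (symmetry; apply Nat.ltb_lt; lia). simpl. f_equal. lia. }
  rewrite (prodR_ext (m - maxL s) _ (fun _ => b 1%nat)).
  2:{ intros. rewrite cnt_app, cnt_zero. unfold cnt. simpl. replace (maxL s + i <? m)%nat with true by (symmetry; apply Nat.ltb_lt; lia). auto.
      intros y Hy. specialize (In_le_maxL s y Hy). lia. }
  rewrite prodR_const. ring. Qed.

Lemma SS_impl (R1 R2 : nat -> nat -> Prop) l : (forall x y, R1 x y -> R2 x y) -> StronglySorted R1 l -> StronglySorted R2 l.
Proof. intros H. induction 1; constructor; auto. eapply Forall_impl; [|eauto]. auto. Qed.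

Lemma sort_SS L : StronglySorted le (NatSort.sort L).
Proof. apply SS_impl with (R1 := fun x y => is_true (NatOrder.leb x y)).
  intros x y H. apply Nat.leb_le. exact H.
  apply Sorted_StronglySorted. intros x y z H1 H2. apply Nat.leb_le. apply Nat.leb_le in H1. apply Nat.leb_le in H2. unfold is_true in *. lia.
  apply NatSort.Sorted_sort. Qed.

Definition Ln (d : nat) (n : nat -> nat) : list nat := map n (seq 1 d).

Lemma Fbar_G d beta n : Fbar d beta n = G beta (Ln d n).
Proof. unfold Fbar. 
  assert (Hl : length (sorted_coords d n) = d).
  { unfold sorted_coords. rewrite <- (Permutation_length (NatSort.Permuted_sort _)). rewrite length_map, length_seq. auto. }
  transitivity (Fo beta (sorted_coords d n)).
  { unfold Fo. rewrite Hl. apply prodR_ext. intros i Hi. replace (d - S i + 1)%nat with (d - i)%nat by lia. reflexivity. }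
  rewrite Fo_G by apply sort_SS. apply G_perm. apply Permutation_sym. apply NatSort.Permuted_sort. Qed.
Definition cntd (d : nat) (a : nat -> bool) : nat := length (filter a (seq 1 d)).
Definition pc (d m : nat) : nat := cntd d (inI m).

Lemma all_coords_S d q : all_coords (S d) q = all_coords d q && q (S d).
Proof. unfold all_coords. rewrite seq_S, forallb_app. simpl. rewrite Bool.andb_true_r. auto. Qed.

Lemma cntd_S d a : cntd (S d) a = (cntd d a + (if a (S d) then 1 else 0))%nat.
Proof. unfold cntd. rewrite seq_S, filter_app, length_app. simpl. destruct (a (S d)); auto. Qed.

Lemma all_coords_ext d q1 q2 : (forall k, (1 <= k <= d)%nat -> q1 k = q2 k) -> all_coords d q1 = all_coords d q2.
Proof. induction d; intros H; auto. rewrite !all_coords_S. rewrite IHd by (intros; apply H; lia). rewrite H by lia. auto. Qed.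

Lemma cntd_ext d q1 q2 : (forall k, (1 <= k <= d)%nat -> q1 k = q2 k) -> cntd d q1 = cntd d q2.
Proof. induction d; intros H; auto. rewrite !cntd_S. rewrite IHd by (intros; apply H; lia). rewrite H by lia. auto. Qed.

Lemma cntd_le d a : (cntd d a <= d)%nat.
Proof. induction d; auto. rewrite cntd_S. destruct (a (S d)); lia. Qed.

Lemma testbit_small m d : (m < 2 ^ d)%nat -> Nat.testbit m d = false.
Proof. intros H. apply Nat.testbit_false. rewrite Nat.div_small by auto. auto. Qed.

Lemma testbit_hi_low m d j : (m < 2 ^ d)%nat -> (j < d)%nat -> Nat.testbit (2 ^ d + m) j = Nat.testbit m j.
Proof. intros H Hj. rewrite <- (Nat.mod_pow2_bits_low _ d) by auto.
  replace (2 ^ d + m)%nat with (m + 1 * 2 ^ d)%nat by lia. rewrite Nat.Div0.mod_add by (apply Nat.pow_nonzero; lia).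
  rewrite Nat.mod_small by auto. auto. Qed.

Lemma testbit_hi m d : (m < 2 ^ d)%nat -> Nat.testbit (2 ^ d + m) d = true.
Proof. intros H. apply Nat.testbit_true. replace (2 ^ d + m)%nat with (m + 1 * 2 ^ d)%nat by lia.
  rewrite Nat.div_add by (apply Nat.pow_nonzero; lia). rewrite Nat.div_small by auto. auto. Qed.

Lemma count_subsets d : forall a f,
  sumR (2 ^ d) (fun m => if all_coords d (fun k => implb (a k) (negb (inI m k))) then f (pc d m) else 0)
  = binsum (d - cntd d a) f.
Proof. induction d; intros a f.
  - simpl. unfold binsum, pc, cntd. simpl. lra.
  - replace (2 ^ S d)%nat with (2 ^ d + 2 ^ d)%nat by (simpl; lia). rewrite sumR_add.
    assert (E1 : forall m, (m < 2 ^ d)%nat ->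
       (if all_coords (S d) (fun k => implb (a k) (negb (inI m k))) then f (pc (S d) m) else 0)
       = (if all_coords d (fun k => implb (a k) (negb (inI m k))) then f (pc d m) else 0)).
    { intros m Hm. rewrite all_coords_S. unfold pc. rewrite cntd_S.
      assert (Hb : inI m (S d) = false) by (unfold inI; replace (S d - 1)%nat with d by lia; apply testbit_small; auto).
      rewrite Hb. simpl. rewrite ?Bool.implb_true_r, ?Bool.andb_true_r, ?Nat.add_0_r. auto. }
    assert (E2 : forall m, (m < 2 ^ d)%nat ->
       (if all_coords (S d) (fun k => implb (a k) (negb (inI (2 ^ d + m) k))) then f (pc (S d) (2 ^ d + m)) else 0)
       = if a (S d) then 0 else (if all_coords d (fun k => implb (a k) (negb (inI m k))) then f (S (pc d m)) else 0)).
    { intros m Hm. rewrite all_coords_S. unfold pc. rewrite cntd_S.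
      assert (Hb : inI (2 ^ d + m) (S d) = true) by (unfold inI; replace (S d - 1)%nat with d by lia; apply testbit_hi; auto).
      rewrite Hb.
      rewrite (all_coords_ext d _ (fun k => implb (a k) (negb (inI m k)))).
      2:{ intros k Hk. unfold inI. rewrite testbit_hi_low; auto; lia. }
      rewrite (cntd_ext d (inI (2 ^ d + m)) (inI m)).
      2:{ intros k Hk. unfold inI. rewrite testbit_hi_low; auto; lia. }
      destruct (a (S d)); simpl. rewrite Bool.andb_false_r. auto. rewrite Bool.andb_true_r. rewrite Nat.add_1_r. auto. }
    rewrite (sumR_ext _ _ _ E1). rewrite (sumR_ext (2 ^ d) _ _ E2). rewrite IHd.
    rewrite cntd_S. pose proof (cntd_le d a).
    destruct (a (S d)).
    + rewrite sumR_zero. replace (S d - (cntd d a + 1))%nat with (d - cntd d a)%nat by lia. lra.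
    + replace (S d - (cntd d a + 0))%nat with (S (d - cntd d a)) by lia. rewrite binsum_S.
      f_equal. apply (IHd a (fun i => f (S i))). Qed.
Definition xb (beta : nat -> R) (k : nat) : R := if Nat.eqb k 0 then 1 else beta k.
Definition qb (d : nat) (beta : nat -> R) (i : nat) : R := nab i (xb beta) (d - i).
Definition ptb (d : nat) (beta : nat -> R) (m : nat) : R := qb d beta (pc d m).

Lemma factor_eq d beta a :
  sumSubsets d (fun m => all_coords d (fun k => implb (a k) (negb (inI m k)))) (ptb d beta)
  = xb beta (cntd d a).
Proof. unfold sumSubsets, ptb. rewrite count_subsets. unfold qb.
  rewrite binsum_nab by lia. f_equal. pose proof (cntd_le d a). lia. Qed.

Lemma cntd_cnt d n t : cntd d (fun k => S t <=? n k) = cnt t (Ln d n).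
Proof. unfold cntd, cnt, Ln. generalize (seq 1 d). induction l; cbn [filter map length]; auto.
  unfold Nat.ltb. destruct (S t <=? n a) eqn:E; cbn [length]; rewrite ?IHl; auto. Qed.

Lemma cnt_pos t L : (t < maxL L)%nat -> (1 <= cnt t L)%nat.
Proof. unfold cnt, maxL. induction L; simpl; intros H. lia.
  destruct (t <? a) eqn:E; simpl. lia. apply Nat.ltb_ge in E. apply IHL. lia. Qed.

Lemma WSG_G d beta n : WSG_surv d (ptb d beta) n = G beta (Ln d n).
Proof. unfold WSG_surv, G. change (maxcoord d n) with (maxL (Ln d n)). apply prodR_ext. intros t Ht.
  rewrite factor_eq. rewrite cntd_cnt. unfold xb. pose proof (cnt_pos _ _ Ht).
  destruct (cnt t (Ln d n)); [lia|]. auto. Qed.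

Lemma WSG_Fbar d beta n : WSG_surv d (ptb d beta) n = Fbar d beta n.
Proof. rewrite WSG_G, Fbar_G. auto. Qed.

Lemma Fbar_exch d beta : Exchangeable d (Fbar d beta).
Proof. intros sigma [H1 H2] n. rewrite !Fbar_G. apply G_perm. unfold Ln.
  rewrite <- (map_map sigma n). apply Permutation_map. apply Permutation_map_same_l.
  - apply FinFun.Injective_map_NoDup_in. intros x y Hx Hy. apply in_seq in Hx, Hy. apply H2; lia. apply seq_NoDup.
  - intros y Hy. apply in_map_iff in Hy. destruct Hy as [x [<- Hx]]. apply in_seq in Hx. apply in_seq. specialize (H1 x ltac:(lia)). lia. Qed.

Lemma all_coords_true d : all_coords d (fun _ => true) = true.
Proof. induction d; auto. rewrite all_coords_S, IHd. auto. Qed.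

Lemma cntd_false d : cntd d (fun _ => false) = O.
Proof. induction d; auto. rewrite cntd_S, IHd. auto. Qed.

Lemma cntd_single d k : (1 <= k <= d)%nat -> cntd d (fun j => j =? k) = 1%nat.
Proof. induction d; intros H. lia. rewrite cntd_S. destruct (Nat.eq_dec k (S d)).
  - subst. rewrite Nat.eqb_refl. rewrite (cntd_ext d _ (fun _ => false)). rewrite cntd_false. auto.
    intros j Hj. apply Nat.eqb_neq. lia.
  - rewrite IHd by lia. replace (S d =? k) with false by (symmetry; apply Nat.eqb_neq; lia). auto. Qed.

Lemma all_coords_single d k m : (1 <= k <= d)%nat ->
  all_coords d (fun j => implb (j =? k) (negb (inI m j))) = negb (inI m k).
Proof. induction d; intros H. lia. rewrite all_coords_S. destruct (Nat.eq_dec k (S d)).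
  - subst. rewrite Nat.eqb_refl. rewrite (all_coords_ext d _ (fun _ => true)). rewrite all_coords_true. auto.
    intros j Hj. replace (j =? S d) with false by (symmetry; apply Nat.eqb_neq; lia). auto.
  - rewrite IHd by lia. replace (S d =? k) with false by (symmetry; apply Nat.eqb_neq; lia). simpl. apply Bool.andb_true_r. Qed.

Lemma InM_nab d beta : InM d (xb beta) -> forall k j, (k <= d)%nat -> (j <= d - k)%nat -> 0 <= nab j (xb beta) k.
Proof. intros [_ [_ H]] k j Hk Hj. rewrite <- nabla_nab. auto. Qed.

Lemma WSG_params d beta : InM d (xb beta) -> WSGParams d (ptb d beta).
Proof. intros HM.
  assert (Hnn : forall m, 0 <= ptb d beta m).
  { intros m. unfold ptb, qb. pose proof (cntd_le d (inI m)). apply (InM_nab d); auto; unfold pc; lia. }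
  assert (Htot : sumSubsets d (fun _ => true) (ptb d beta) = 1).
  { pose proof (factor_eq d beta (fun _ => false)) as F. cbv beta in F. rewrite cntd_false in F.
    replace 1 with (xb beta 0) by reflexivity. rewrite <- F. unfold sumSubsets. apply sumR_ext. intros. cbn [implb]. rewrite all_coords_true. auto. }
  split; [|split]; auto.
  - intros m Hm. split; auto. rewrite <- Htot. unfold sumSubsets.
    apply (sumR_term_le (2 ^ d) (fun m => if true then ptb d beta m else 0) m); auto.
  - intros k Hk. 
    replace (sumSubsets d (fun m => negb (inI m k)) (ptb d beta)) with (sumSubsets d (fun m => all_coords d (fun j => implb (j =? k) (negb (inI m j)))) (ptb d beta)).
    2:{ unfold sumSubsets. apply sumR_ext. intros. rewrite all_coords_single; auto. }
    rewrite factor_eq, cntd_single by auto. unfold xb. simpl. destruct HM as [_ [H1 _]]. exact H1. Qed.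
From Stdlib Require Import FunctionalExtensionality.

Definition dec (v : nat -> nat) (c : nat) : nat -> nat := upd v c (v c - 1)%nat.
Definition Dk (c : nat) (H : (nat -> nat) -> R) (v : nat -> nat) : R := H (dec v c) - H v.
Fixpoint Dall (k : nat) (H : (nat -> nat) -> R) : (nat -> nat) -> R :=
  match k with O => H | S k' => Dall k' (Dk (S k') H) end.
Fixpoint Corner (k : nat) (lo : nat -> nat) (M : nat) (H : (nat -> nat) -> R) : R :=
  match k with
  | O => H (fun _ => O)
  | S k' => Corner k' lo M (fun w => H (upd w (S k') (Nat.min (lo (S k')) M)) - H (upd w (S k') M))
  end.

Lemma upd_comm v j k a b : j <> k -> upd (upd v j a) k b = upd (upd v k b) j a.
Proof. intros H. apply functional_extensionality. intros i. unfold upd.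
  destruct (Nat.eqb_spec i k), (Nat.eqb_spec i j); subst; auto. lia. Qed.

Lemma upd_upd v k a b : upd (upd v k a) k b = upd v k b.
Proof. apply functional_extensionality. intros i. unfold upd. destruct (i =? k); auto. Qed.

Lemma upd_eq v k a : upd v k a k = a.
Proof. unfold upd. rewrite Nat.eqb_refl. auto. Qed.

Lemma upd_neq v k a i : i <> k -> upd v k a i = v i.
Proof. intros H. unfold upd. replace (i =? k) with false by (symmetry; apply Nat.eqb_neq; auto). auto. Qed.

Lemma dec_upd_neq v j k a : j <> k -> dec (upd v k a) j = upd (dec v j) k a.
Proof. intros H. unfold dec. rewrite upd_neq by auto. apply upd_comm. auto. Qed.

Lemma dec_upd_eq v k a : dec (upd v k a) k = upd v k (a - 1)%nat.
Proof. unfold dec. rewrite upd_eq. apply upd_upd. Qed.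

Lemma Dall_upd j : forall H v k a, (j < k)%nat -> Dall j H (upd v k a) = Dall j (fun w => H (upd w k a)) v.
Proof. induction j; intros H v k a Hjk; simpl. auto.
  rewrite IHj by lia. f_equal. apply functional_extensionality. intros w. unfold Dk.
  rewrite dec_upd_neq by lia. auto. Qed.

Lemma Corner_zero k lo M : Corner k lo M (fun _ => 0) = 0.
Proof. induction k; simpl; auto. rewrite <- IHk. f_equal. apply functional_extensionality; intros; lra. Qed.

Lemma Corner_sum k lo M : forall N (F : nat -> (nat -> nat) -> R),
  Corner k lo M (fun w => sumR N (fun t => F t w)) = sumR N (fun t => Corner k lo M (F t)).
Proof. induction k; intros N F; simpl; auto.
  rewrite <- IHk. f_equal. apply functional_extensionality; intros w. rewrite sumR_minus. auto. Qed.

Lemma telescope a M (h : nat -> R) :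
  sumR M (fun t => if a <=? t then h t - h (S t) else 0) = h (Nat.min a M) - h M.
Proof. induction M; simpl. rewrite Nat.min_0_r. lra.
  rewrite IHM. destruct (Nat.leb_spec a M).
  - rewrite !Nat.min_l by lia. lra.
  - rewrite Nat.min_r by lia. rewrite Nat.min_r by lia. lra. Qed.

Lemma boxsum_Dall k lo M : forall H, boxsum k lo M (Dall k H) = Corner k lo M H.
Proof. induction k; intros H; simpl; auto.
  transitivity (sumR M (fun t => Corner k lo M (fun w => if lo (S k) <=? t then H (upd w (S k) t) - H (upd w (S k) (S t)) else 0))).
  - apply sumR_ext. intros t Ht. destruct (lo (S k) <=? t).
    + rewrite <- IHk. f_equal. apply functional_extensionality. intros v.
      rewrite Dall_upd by lia. f_equal. apply functional_extensionality. intros w. unfold Dk.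
      rewrite dec_upd_eq. replace (S t - 1)%nat with t by lia. auto.
    + rewrite Corner_zero. auto.
  - rewrite <- Corner_sum. f_equal. apply functional_extensionality. intros w.
    rewrite (telescope (lo (S k)) M (fun t => H (upd w (S k) t))). auto. Qed.

Lemma Corner_bound k lo M : forall H B, (forall w, Rabs (H w) <= B) -> Rabs (Corner k lo M H) <= 2 ^ k * B.
Proof. induction k; intros H B HB; simpl. specialize (HB (fun _ => O)). lra.
  assert (Rabs (Corner k lo M (fun w => H (upd w (S k) (Nat.min (lo (S k)) M)) - H (upd w (S k) M))) <= 2 ^ k * (2 * B)).
  { apply IHk. intros w. pose proof (HB (upd w (S k) (Nat.min (lo (S k)) M))). pose proof (HB (upd w (S k) M)).
    eapply Rle_trans. apply Rabs_triang. rewrite Rabs_Ropp. lra. }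
  lra. Qed.

Fixpoint Eval (k : nat) (lo : nat -> nat) (H : (nat -> nat) -> R) : R :=
  match k with O => H (fun _ => O) | S k' => Eval k' lo (fun w => H (upd w (S k') (lo (S k')))) end.

Lemma Corner_minus k lo M : forall A1 A2, Corner k lo M (fun w => A1 w - A2 w) = Corner k lo M A1 - Corner k lo M A2.
Proof. induction k; intros A1 A2; simpl; auto. rewrite <- IHk. f_equal. apply functional_extensionality; intros; lra. Qed.

Lemma Corner_approx k lo M : forall H B, 0 <= B ->
  (forall j, (1 <= j <= k)%nat -> (lo j <= M)%nat) ->
  (forall w j, (1 <= j <= k)%nat -> Rabs (H (upd w j M)) <= B) ->
  Rabs (Corner k lo M H - Eval k lo H) <= INR k * 2 ^ k * B.
Proof. induction k; intros H B HB0 Hlo HB; cbn [Corner Eval]. rewrite Rminus_diag, Rabs_R0. simpl. lra.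
  rewrite Nat.min_l by (apply Hlo; lia).
  rewrite Corner_minus.
  assert (I1 : Rabs (Corner k lo M (fun w => H (upd w (S k) (lo (S k)))) - Eval k lo (fun w => H (upd w (S k) (lo (S k))))) <= INR k * 2 ^ k * B).
  { apply IHk; auto. intros j Hj; apply Hlo; lia. intros w j Hj. rewrite upd_comm by lia. apply HB. lia. }
  assert (I2 : Rabs (Corner k lo M (fun w => H (upd w (S k) M))) <= 2 ^ k * B).
  { apply Corner_bound. intros w. apply HB. lia. }
  pose proof (pow_le 2 k ltac:(lra)). pose proof (pos_INR k). rewrite S_INR.
  replace (Corner k lo M (fun w => H (upd w (S k) (lo (S k)))) - Corner k lo M (fun w => H (upd w (S k) M)) - Eval k lo (fun w => H (upd w (S k) (lo (S k)))))
    with ((Corner k lo M (fun w => H (upd w (S k) (lo (S k)))) - Eval k lo (fun w => H (upd w (S k) (lo (S k))))) + - Corner k lo M (fun w => H (upd w (S k) M))) by ring.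
  eapply Rle_trans. apply Rabs_triang. rewrite Rabs_Ropp.
  assert (0 <= 2 ^ k * B) by (apply Rmult_le_pos; auto).
  assert (INR k * 2 ^ k * B + 2 ^ k * B <= (INR k + 1) * 2 ^ k * B) by nra.
  assert ((INR k + 1) * 2 ^ k * B <= (INR k + 1) * 2 ^ S k * B). { cbn [pow]. assert (0 <= (INR k + 1) * 2 ^ k * B) by (apply Rmult_le_pos; [apply Rmult_le_pos|]; lra). nra. }
  lra. Qed.

Definition restr (k : nat) (lo : nat -> nat) : nat -> nat := fun i => if (1 <=? i) && (i <=? k) then lo i else O.

Lemma Eval_restr k lo : forall H, Eval k lo H = H (restr k lo).
Proof. induction k as [|k IHk]; intros H; cbn [Eval].
  - f_equal. apply functional_extensionality. intros i. unfold restr.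
    destruct (Nat.leb_spec 1 i), (Nat.leb_spec i 0); simpl; auto; lia.
  - rewrite IHk. f_equal. apply functional_extensionality. intros i. unfold restr, upd.
    destruct (Nat.eqb_spec i (S k)).
    + subst. replace (1 <=? S k) with true by (symmetry; apply Nat.leb_le; lia). rewrite Nat.leb_refl. auto.
    + destruct (1 <=? i); simpl; auto. destruct (Nat.leb_spec i k), (Nat.leb_spec i (S k)); auto; lia. Qed.

Lemma Ln_restr d lo : Ln d (restr d lo) = Ln d lo.
Proof. unfold Ln. apply map_ext_in. intros i Hi. apply in_seq in Hi. unfold restr.
  replace (1 <=? i) with true by (symmetry; apply Nat.leb_le; lia). replace (i <=? d) with true by (symmetry; apply Nat.leb_le; lia). auto. Qed.

Lemma boxsum_ext_pos k lo M : forall g1 g2,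
  (forall v, (forall j, (1 <= j <= k)%nat -> (1 <= v j)%nat) -> g1 v = g2 v) -> boxsum k lo M g1 = boxsum k lo M g2.
Proof. induction k; intros g1 g2 H; simpl. apply H. intros; lia.
  apply sumR_ext. intros t Ht. destruct (lo (S k) <=? t); auto. apply IHk. intros v Hv. apply H.
  intros j Hj. destruct (Nat.eq_dec j (S k)). subst. rewrite upd_eq. lia. rewrite upd_neq by auto. apply Hv. lia. Qed.
Definition cond (Q : nat -> bool) (v : nat -> nat) (t m k : nat) : bool :=
  if Q k then implb (S (S t) <=? v k) (negb (inI m k)) && implb (v k =? S t) (inI m k)
  else implb (S t <=? v k) (negb (inI m k)).

Definition Psi (d : nat) (pt : nat -> R) (Q : nat -> bool) (T : nat) (v : nat -> nat) : R :=
  prodR T (fun t => sumSubsets d (fun m => all_coords d (cond Q v t m)) pt).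

Lemma prodR_diff T s f g h : (s < T)%nat ->
  (forall t, (t < T)%nat -> t <> s -> f t = h t /\ g t = h t) -> f s - g s = h s ->
  prodR T f - prodR T g = prodR T h.
Proof. induction T; intros Hs Ht Hfs. lia. simpl. destruct (Nat.eq_dec s T).
  - subst. rewrite (prodR_ext T f h), (prodR_ext T g h) by (intros; apply Ht; lia). rewrite <- Hfs. ring.
  - destruct (Ht T ltac:(lia) (not_eq_sym n)) as [E1 E2]. rewrite E1, E2. 
    rewrite <- Rmult_minus_distr_r. rewrite IHT; auto; try lia. all: intros; apply Ht; lia. Qed.

Lemma all_coords_split d c q : (1 <= c <= d)%nat ->
  all_coords d q = all_coords d (fun k => if k =? c then true else q k) && q c.
Proof. induction d; intros H. lia. rewrite !all_coords_S. destruct (Nat.eq_dec c (S d)).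
  - subst. rewrite Nat.eqb_refl. rewrite (all_coords_ext d (fun k => if k =? S d then true else q k) q).
    destruct (all_coords d q); destruct (q (S d)); auto.
    intros k Hk. replace (k =? S d) with false by (symmetry; apply Nat.eqb_neq; lia). auto.
  - rewrite IHd by lia. replace (S d =? c) with false by (symmetry; apply Nat.eqb_neq; lia).
    destruct (all_coords d (fun k => if k =? c then true else q k)), (q c), (q (S d)); auto. Qed.

Lemma Psi_step d pt Q Q' T v c : (1 <= c <= d)%nat -> Q c = false -> Q' c = true ->
  (forall k, k <> c -> Q' k = Q k) -> (1 <= v c <= T)%nat ->
  Psi d pt Q T (dec v c) - Psi d pt Q T v = Psi d pt Q' T v.
Proof. intros Hc HQ HQ' HQQ Hv. unfold Psi. apply (prodR_diff T (v c - 1)).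
  - lia.
  - intros t Ht Hts. split; unfold sumSubsets; apply sumR_ext; intros m Hm.
    + rewrite (all_coords_ext d (cond Q (dec v c) t m) (cond Q' v t m)); auto.
      intros k Hk; unfold cond; destruct (Nat.eq_dec k c).
      * subst. rewrite HQ, HQ'. unfold dec. rewrite upd_eq.
        destruct (Nat.leb_spec (S t) (v c - 1)), (Nat.leb_spec (S (S t)) (v c)), (Nat.eqb_spec (v c) (S t)), (inI m c); simpl; auto; lia.
      * unfold dec. rewrite upd_neq by auto. rewrite HQQ by auto. auto.
    + rewrite (all_coords_ext d (cond Q v t m) (cond Q' v t m)); auto.
      intros k Hk; unfold cond; destruct (Nat.eq_dec k c).
      * subst. rewrite HQ, HQ'.
        destruct (Nat.leb_spec (S t) (v c)), (Nat.leb_spec (S (S t)) (v c)), (Nat.eqb_spec (v c) (S t)), (inI m c); simpl; auto; lia.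
      * rewrite HQQ by auto. auto.
  - unfold sumSubsets. rewrite <- sumR_minus. apply sumR_ext. intros m Hm.
    rewrite (all_coords_split d c (cond Q (dec v c) (v c - 1) m)) by auto.
    rewrite (all_coords_split d c (cond Q v (v c - 1) m)) by auto.
    rewrite (all_coords_split d c (cond Q' v (v c - 1) m)) by auto.
    rewrite (all_coords_ext d (fun k => if k =? c then true else cond Q (dec v c) (v c - 1) m k) (fun k => if k =? c then true else cond Q v (v c - 1) m k)).
    2:{ intros k Hk. destruct (Nat.eqb_spec k c); auto. unfold cond, dec. rewrite upd_neq; auto. }
    rewrite (all_coords_ext d (fun k => if k =? c then true else cond Q' v (v c - 1) m k) (fun k => if k =? c then true else cond Q v (v c - 1) m k)).
    2:{ intros k Hk. destruct (Nat.eqb_spec k c); auto. unfold cond. rewrite HQQ; auto. }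
    unfold cond. rewrite HQ, HQ'. unfold dec. rewrite upd_eq.
    replace (S (v c - 1) <=? v c - 1) with false by (symmetry; apply Nat.leb_gt; lia).
    replace (S (v c - 1) <=? v c) with true by (symmetry; apply Nat.leb_le; lia).
    replace (S (S (v c - 1)) <=? v c) with false by (symmetry; apply Nat.leb_gt; lia).
    replace (v c =? S (v c - 1)) with true by (symmetry; apply Nat.eqb_eq; lia).
    destruct (all_coords d _), (inI m c); simpl; lra. Qed.

Definition Qk (k' : nat) : nat -> bool := fun k => k' <? k.

Lemma maxcoord_dec d w c : (maxcoord d (dec w c) <= maxcoord d w)%nat.
Proof. change (maxL (Ln d (dec w c)) <= maxL (Ln d w))%nat. apply maxL_le. intros y Hy.
  unfold Ln in Hy. apply in_map_iff in Hy. destruct Hy as [j [<- Hj]].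
  assert (dec w c j <= w j)%nat. { unfold dec, upd. destruct (j =? c) eqn:E. apply Nat.eqb_eq in E. subst. lia. lia. }
  assert (w j <= maxL (Ln d w))%nat by (apply In_le_maxL; unfold Ln; apply in_map; auto). lia. Qed.

Lemma le_maxcoord d w c : (1 <= c <= d)%nat -> (w c <= maxcoord d w)%nat.
Proof. intros. change (w c <= maxL (Ln d w))%nat. apply In_le_maxL. unfold Ln. apply in_map. apply in_seq. lia. Qed.

Lemma Dall_Psi d pt T k' : (k' <= d)%nat -> forall H,
  (forall w, (forall i, (k' < i <= d)%nat -> (1 <= w i)%nat) -> (maxcoord d w <= T)%nat -> H w = Psi d pt (Qk k') T w) ->
  forall v, (forall i, (1 <= i <= d)%nat -> (1 <= v i)%nat) -> (maxcoord d v <= T)%nat -> Dall k' H v = Psi d pt (Qk 0) T v.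
Proof. induction k'; intros Hk H HH v Hv HvT; simpl.
  - apply HH; [intros; apply Hv; lia | exact HvT].
  - apply IHk'; [lia| |exact Hv|exact HvT]. intros w Hw HwT. unfold Dk.
    pose proof (maxcoord_dec d w (S k')).
    rewrite (HH (dec w (S k'))), (HH w).
    + apply Psi_step. lia. unfold Qk. apply Nat.ltb_ge. lia. unfold Qk. apply Nat.ltb_lt. lia.
      intros k Hkk. unfold Qk. destruct (Nat.ltb_spec k' k), (Nat.ltb_spec (S k') k); auto; lia.
      split. apply Hw; lia. pose proof (le_maxcoord d w (S k')). lia.
    + intros i Hi. apply Hw. lia.
    + exact HwT.
    + intros i Hi. unfold dec. rewrite upd_neq by lia. apply Hw. lia.
    + lia. Qed.
Lemma Htot_lem d beta : InM d (xb beta) -> sumSubsets d (fun _ => true) (ptb d beta) = 1.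
Proof. intros HM. destruct (WSG_params d beta HM) as [_ [H _]]. exact H. Qed.

Lemma WSG_Psi_base d beta : InM d (xb beta) -> forall T w, (maxcoord d w <= T)%nat ->
  WSG_surv d (ptb d beta) w = Psi d (ptb d beta) (Qk d) T w.
Proof. intros HM T w HT. unfold WSG_surv, Psi. rewrite (prodR_split T (maxcoord d w)) by auto.
  rewrite (prodR_ext (T - maxcoord d w) _ (fun _ => 1)).
  - rewrite prodR_const, pow1, Rmult_1_r. apply prodR_ext. intros t Ht. unfold sumSubsets. apply sumR_ext. intros m Hm.
    rewrite (all_coords_ext d (cond (Qk d) w t m) (fun k => implb (S t <=? w k) (negb (inI m k)))); auto.
    intros k Hk. unfold cond, Qk. replace (d <? k) with false by (symmetry; apply Nat.ltb_ge; lia). auto.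
  - intros i Hi. rewrite <- (Htot_lem d beta HM). unfold sumSubsets. apply sumR_ext. intros m Hm.
    rewrite (all_coords_ext d (cond (Qk d) w (maxcoord d w + i) m) (fun _ => true)). rewrite all_coords_true. auto.
    intros k Hk. unfold cond, Qk. replace (d <? k) with false by (symmetry; apply Nat.ltb_ge; lia).
    pose proof (le_maxcoord d w k Hk). replace (S (maxcoord d w + i) <=? w k) with false by (symmetry; apply Nat.leb_gt; lia). auto. Qed.

Lemma beta_bounds d beta : InM d (xb beta) -> forall c, (1 <= c <= d)%nat -> 0 <= beta c <= beta 1%nat.
Proof. intros HM. induction c; intros Hc. lia. destruct c.
  - split; [|lra]. pose proof (InM_nab d beta HM 1 0 ltac:(lia) ltac:(lia)). rewrite nab_0 in H. exact H.
  - assert (IH := IHc ltac:(lia)). pose proof (InM_nab d beta HM (S c) 1 ltac:(lia) ltac:(lia)).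
    rewrite nab_S, !nab_0 in H. unfold xb in H. simpl in H. 
    pose proof (InM_nab d beta HM (S (S c)) 0 ltac:(lia) ltac:(lia)). rewrite nab_0 in H0. unfold xb in H0. simpl in H0. lra. Qed.

Lemma beta1_lt d beta : InM d (xb beta) -> beta 1%nat < 1.
Proof. intros [_ [H _]]. exact H. Qed.

Lemma prodR_bound N f r : (forall t, (t < N)%nat -> 0 <= f t <= r) -> prodR N f <= r ^ N.
Proof. induction N; intros H; simpl. lra. assert (0 <= prodR N f) by (apply prodR_nonneg; intros; apply H; lia).
  specialize (IHN ltac:(intros; apply H; lia)). destruct (H N ltac:(lia)). 
  assert (0 <= r) by lra. nra. Qed.

Lemma pow_anti r M N : 0 <= r <= 1 -> (M <= N)%nat -> r ^ N <= r ^ M.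
Proof. intros Hr H. induction H. lra. simpl. assert (0 <= r ^ m) by (apply pow_le; lra). nra. Qed.

Lemma cnt_le_length t L : (cnt t L <= length L)%nat.
Proof. unfold cnt. induction L; simpl; auto. destruct (t <? a); simpl; lia. Qed.

Lemma S_bound d beta : InM d (xb beta) -> forall M w j, (1 <= j <= d)%nat ->
  Rabs (WSG_surv d (ptb d beta) (upd w j M)) <= beta 1%nat ^ M.
Proof. intros HM M w j Hj. rewrite WSG_G. set (L := Ln d (upd w j M)).
  assert (HL : length L = d) by (unfold L, Ln; rewrite length_map, length_seq; auto).
  assert (HmM : (M <= maxL L)%nat). { pose proof (le_maxcoord d (upd w j M) j Hj). rewrite upd_eq in H. exact H. }
  pose proof (beta_bounds d beta HM 1 ltac:(lia)).
  assert (Hf : forall t, (t < maxL L)%nat -> 0 <= beta (cnt t L) <= beta 1%nat).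
  { intros t Ht. apply (beta_bounds d); auto. pose proof (cnt_pos t L Ht). pose proof (cnt_le_length t L). lia. }
  assert (0 <= G beta L) by (apply prodR_nonneg; intros; apply Hf; auto).
  rewrite Rabs_right by lra. eapply Rle_trans. apply prodR_bound. apply Hf.
  apply pow_anti; auto. pose proof (beta1_lt d beta HM). lra. Qed.

Definition pmf (d : nat) (beta : nat -> R) (v : nat -> nat) : R := Psi d (ptb d beta) (Qk 0) (maxcoord d v) v.

Lemma pmf_nonneg d beta : InM d (xb beta) -> forall v, 0 <= pmf d beta v.
Proof. intros HM v. unfold pmf, Psi. apply prodR_nonneg. intros. unfold sumSubsets. apply sumR_nonneg. intros m Hm.
  destruct (all_coords _ _). destruct (WSG_params d beta HM) as [Hp _]. apply Hp; auto. lra. Qed.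

Lemma pmf_conv d beta : (1 <= d)%nat -> InM d (xb beta) -> forall n,
  Un_cv (fun M => boxsum d n M (pmf d beta)) (WSG_surv d (ptb d beta) n).
Proof. intros hd HM n eps Heps. set (S := WSG_surv d (ptb d beta)). set (b1 := beta 1%nat).
  assert (Hb1 : 0 <= b1 < 1). { pose proof (beta_bounds d beta HM 1). pose proof (beta1_lt d beta HM). unfold b1.
    specialize (H ltac:(lia)). lra. }
  set (K := INR d * 2 ^ d).
  assert (HK : 0 <= K) by (unfold K; apply Rmult_le_pos; [apply pos_INR|apply pow_le; lra]).
  destruct (pow_lt_1_zero b1 ltac:(rewrite Rabs_right; lra) (eps / (K + 1)) ltac:(apply Rdiv_lt_0_compat; lra)) as [N1 HN1].
  exists (Nat.max N1 (maxcoord d n)). intros M HM'. unfold R_dist.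
  assert (E1 : boxsum d n M (pmf d beta) = Corner d n M S).
  { rewrite <- boxsum_Dall. apply boxsum_ext_pos. intros v Hv. unfold pmf. symmetry.
    apply (Dall_Psi d (ptb d beta) (maxcoord d v) d). lia. intros w _ Hw. apply WSG_Psi_base; auto. auto. lia. }
  assert (E2 : S n = Eval d n S).
  { rewrite Eval_restr. unfold S. rewrite !WSG_G. rewrite Ln_restr. auto. }
  rewrite E1, E2.
  assert (HA : Rabs (Corner d n M S - Eval d n S) <= K * b1 ^ M).
  { apply Corner_approx. apply pow_le; lra.
    intros j Hj. pose proof (le_maxcoord d n j Hj). lia.
    intros w j Hj. apply S_bound; auto. }
  specialize (HN1 M ltac:(lia)). rewrite Rabs_right in HN1 by (apply Rle_ge, pow_le; lra).
  assert (0 <= b1 ^ M) by (apply pow_le; lra).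
  assert (K * b1 ^ M <= K * (eps / (K + 1))) by (apply Rmult_le_compat_l; lra).
  assert (K * (eps / (K + 1)) < eps). { apply (Rmult_lt_reg_r (K + 1)). lra. field_simplify; lra. }
  lra. Qed.

Lemma maxcoord_zero d : maxcoord d (fun _ => O) = O.
Proof. change (maxL (Ln d (fun _ => O)) = O). pose proof (maxL_le (Ln d (fun _ => O)) O). 
  assert (maxL (Ln d (fun _ => O)) <= 0)%nat. { apply H. intros y Hy. unfold Ln in Hy. apply in_map_iff in Hy. destruct Hy as [? [<- _]]. lia. } lia. Qed.

Lemma InM_surv d beta : (1 <= d)%nat -> InM d (xb beta) -> IsDiscreteSurvival d (Fbar d beta).
Proof. intros hd HM. exists (pmf d beta). split; [|split].
  - apply pmf_nonneg; auto.
  - replace 1 with (WSG_surv d (ptb d beta) (fun _ => O)). apply pmf_conv; auto.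
    unfold WSG_surv. rewrite maxcoord_zero. reflexivity.
  - intros n. rewrite <- WSG_Fbar. apply pmf_conv; auto. Qed.
Fixpoint boxP (k : nat) (P : nat -> nat -> bool) (M : nat) (g : (nat -> nat) -> R) : R :=
  match k with
  | O => g (fun _ => O)
  | S k' => sumR M (fun t => if P (S k') t then boxP k' P M (fun v => g (upd v (S k') (S t))) else 0)
  end.

Lemma boxsum_boxP k lo M : forall g, boxsum k lo M g = boxP k (fun c t => lo c <=? t) M g.
Proof. induction k; intros g; simpl; auto. apply sumR_ext. intros. destruct (lo (S k) <=? i); auto. Qed.

Lemma boxP_ext k M : forall (P P' : nat -> nat -> bool) (g : (nat -> nat) -> R), (forall c t, (1 <= c <= k)%nat -> P c t = P' c t) -> boxP k P M g = boxP k P' M g.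
Proof. induction k; intros P P' g H; simpl; auto. apply sumR_ext. intros t Ht. rewrite H by lia.
  destruct (P' (S k) t); auto. apply IHk. intros; apply H; lia. Qed.

Lemma boxP_add k M c : forall (P P1 P2 : nat -> nat -> bool) (g : (nat -> nat) -> R), (1 <= c <= k)%nat ->
  (forall c' t, c' <> c -> P c' t = P1 c' t /\ P c' t = P2 c' t) ->
  (forall t, (if P c t then 1 else 0) = (if P1 c t then 1 else 0) + (if P2 c t then 1 else 0) :> R) ->
  boxP k P M g = boxP k P1 M g + boxP k P2 M g.
Proof. induction k; intros P P1 P2 g Hc HP Hi. lia. simpl. rewrite <- sumR_plus. apply sumR_ext. intros t Ht.
  destruct (Nat.eq_dec c (S k)).
  - subst. rewrite (boxP_ext k M P1 P), (boxP_ext k M P2 P).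
    2,3: intros c' t' Hc'; symmetry; apply HP; lia.
    specialize (Hi t). destruct (P (S k) t), (P1 (S k) t), (P2 (S k) t); lra.
  - destruct (HP (S k) t ltac:(lia)) as [E1 E2]. rewrite <- E1, <- E2. destruct (P (S k) t). apply IHk; auto. lia. lra. Qed.

Lemma boxP_nonneg k M : forall P g, (forall v, 0 <= g v) -> 0 <= boxP k P M g.
Proof. induction k; intros P g H; simpl; auto. apply sumR_nonneg. intros. destruct (P (S k) i). apply IHk; auto. lra. Qed.

Lemma boxP_mono k M : forall P g, (forall v, 0 <= g v) -> boxP k P M g <= boxP k P (S M) g.
Proof. induction k; intros P g H; simpl. lra.
  assert (0 <= if P (S k) M then boxP k P (S M) (fun v => g (upd v (S k) (S M))) else 0).
  { destruct (P (S k) M). apply boxP_nonneg; auto. lra. }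
  assert (sumR M (fun t => if P (S k) t then boxP k P M (fun v => g (upd v (S k) (S t))) else 0)
        <= sumR M (fun t => if P (S k) t then boxP k P (S M) (fun v => g (upd v (S k) (S t))) else 0)).
  { apply sumR_le. intros. destruct (P (S k) i). apply IHk; auto. lra. }
  lra. Qed.

Lemma boxP_empty k M c : forall P g, (1 <= c <= k)%nat -> (forall t, (t < M)%nat -> P c t = false) -> boxP k P M g = 0.
Proof. induction k; intros P g Hc H. lia. simpl. transitivity (sumR M (fun _ => 0)); [|apply sumR_zero]. apply sumR_ext. intros t Ht.
  destruct (Nat.eq_dec c (S k)). subst. rewrite H; auto.
  destruct (P (S k) t); auto. apply IHk; auto. lia. Qed.

Lemma lim_nonneg u l : Un_cv u l -> (forall n, 0 <= u n) -> 0 <= l.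
Proof. intros H Hu. destruct (Rle_or_lt 0 l); auto. destruct (H (- l) ltac:(lra)) as [N HN].
  specialize (HN N ltac:(lia)). specialize (Hu N). unfold R_dist in HN. 
  rewrite Rabs_right in HN by lra. lra. Qed.

Lemma cntd_plus1 d c f g : (1 <= c <= d)%nat -> f c = true -> g c = false ->
  (forall i, i <> c -> f i = g i) -> cntd d f = S (cntd d g).
Proof. induction d; intros Hc Hf Hg H. lia. rewrite !cntd_S. destruct (Nat.eq_dec c (S d)).
  - subst. rewrite Hf, Hg. rewrite (cntd_ext d f g). lia. intros; apply H; lia.
  - rewrite IHd by (auto; lia). rewrite H by auto. lia. Qed.

Lemma cntd_interval d a b : (a <= b)%nat -> cntd d (fun i => (a <? i) && (i <=? b)) = (Nat.min b d - Nat.min a d)%nat.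
Proof. intros Hab. induction d. { change (cntd 0 (fun i => (a <? i) && (i <=? b))) with 0%nat. lia. } rewrite cntd_S, IHd.
  destruct (Nat.ltb_spec a (S d)), (Nat.leb_spec (S d) b); simpl; lia. Qed.

Definition Pred (e kk : nat -> bool) : nat -> nat -> bool :=
  fun c t => if e c then t =? 0 else if kk c then 1 <=? t else true.
Definition er (e : nat -> bool) (c : nat) : nat -> bool := fun i => e i && (i <=? c).

Lemma G_indicator d beta (kk : nat -> bool) : Fbar d beta (fun i => if kk i then 1%nat else O) = xb beta (cntd d kk).
Proof. rewrite Fbar_G. set (lo := fun i => if kk i then 1%nat else O).
  assert (Hc : cntd d kk = cnt 0 (Ln d lo)).
  { rewrite <- cntd_cnt. apply cntd_ext. intros k Hk. unfold lo. destruct (kk k); auto. }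
  assert (Hm : (maxL (Ln d lo) <= 1)%nat).
  { apply maxL_le. intros y Hy. unfold Ln in Hy. apply in_map_iff in Hy. destruct Hy as [i [<- _]]. unfold lo. destruct (kk i); lia. }
  unfold G. rewrite Hc. destruct (maxL (Ln d lo)) eqn:E.
  - rewrite cnt_zero. reflexivity. intros y Hy. pose proof (In_le_maxL _ _ Hy). lia.
  - assert (n = O) by lia. subst. simpl. pose proof (cnt_pos 0 (Ln d lo) ltac:(lia)). unfold xb.
    destruct (cnt 0 (Ln d lo)). lia. simpl. lra. Qed.

Lemma Phi_conv (d : nat) (beta : nat -> R) (p : (nat -> nat) -> R)
  (Hsurv : forall n, Un_cv (fun M => boxsum d n M p) (Fbar d beta n)) c : (c <= d)%nat -> forall e kk, (forall i, er e c i = true -> kk i = false) ->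
  Un_cv (fun M => boxP d (Pred (er e c) kk) M p) (nab (cntd d (er e c)) (xb beta) (cntd d kk)).
Proof. induction c; intros Hcd e kk Hdis.
  - rewrite (cntd_ext d (er e 0) (fun _ => false)) by (intros k Hk; unfold er; replace (k <=? 0) with false by (symmetry; apply Nat.leb_gt; lia); apply Bool.andb_false_r).
    rewrite cntd_false, nab_0. rewrite <- G_indicator.
    eapply Un_cv_ext. 2: apply Hsurv. intros M. cbv beta. rewrite boxsum_boxP. apply boxP_ext. intros c t Hc.
    unfold Pred, er. replace (c <=? 0) with false by (symmetry; apply Nat.leb_gt; lia). rewrite Bool.andb_false_r.
    destruct (kk c); auto.
  - destruct (e (S c)) eqn:Ee.
    + assert (Hk : kk (S c) = false) by (apply Hdis; unfold er; rewrite Ee, Nat.leb_refl; auto).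
      set (kk' := fun i => kk i || (i =? S c)).
      assert (Hdis' : forall i, er e c i = true -> kk' i = false).
      { intros i Hi. unfold kk'. rewrite Hdis. unfold er in Hi. apply andb_prop in Hi. destruct Hi as [_ Hi]. apply Nat.leb_le in Hi.
        simpl. apply Nat.eqb_neq. lia. unfold er in *. apply andb_prop in Hi. destruct Hi as [H1 H2]. rewrite H1. apply Nat.leb_le in H2. simpl. apply Nat.leb_le. lia. }
      assert (Hdis0 : forall i, er e c i = true -> kk i = false).
      { intros i Hi. apply Hdis. unfold er in *. apply andb_prop in Hi. destruct Hi as [H1 H2]. rewrite H1. apply Nat.leb_le in H2. simpl. apply Nat.leb_le. lia. }
      pose proof (CV_minus _ _ _ _ (IHc ltac:(lia) e kk Hdis0) (IHc ltac:(lia) e kk' Hdis')) as HC.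
      assert (E1 : cntd d kk' = S (cntd d kk)).
      { apply (cntd_plus1 d (S c)). lia. unfold kk'. rewrite Nat.eqb_refl. apply Bool.orb_true_r. auto.
        intros i Hi. unfold kk'. replace (i =? S c) with false by (symmetry; apply Nat.eqb_neq; auto). apply Bool.orb_false_r. }
      assert (E2 : cntd d (er e (S c)) = S (cntd d (er e c))).
      { apply (cntd_plus1 d (S c)). lia. unfold er. rewrite Ee, Nat.leb_refl. auto. unfold er. replace (S c <=? c) with false by (symmetry; apply Nat.leb_gt; lia). apply Bool.andb_false_r.
        intros i Hi. unfold er. destruct (e i); simpl; auto. destruct (Nat.leb_spec i (S c)), (Nat.leb_spec i c); auto; lia. }
      rewrite E2, nab_S. rewrite E1 in HC.
      eapply Un_cv_ext. 2: exact HC. intros M. simpl.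
      rewrite (boxP_add d M (S c) (Pred (er e c) kk) (Pred (er e (S c)) kk) (Pred (er e c) kk')). lra. lia.
      * intros c' t Hc'. unfold Pred, kk', er. replace (c' =? S c) with false by (symmetry; apply Nat.eqb_neq; auto). rewrite Bool.orb_false_r.
        destruct (e c'); simpl; auto. destruct (Nat.leb_spec c' (S c)), (Nat.leb_spec c' c); auto; lia.
      * intros t. unfold Pred, kk', er. rewrite Ee, Nat.leb_refl, Nat.eqb_refl, Hk.
        replace (S c <=? c) with false by (symmetry; apply Nat.leb_gt; lia). cbn [andb orb].
        destruct t; simpl; lra.
    + assert (E : er e (S c) = er e c).
      { apply functional_extensionality. intros i. unfold er. destruct (Nat.eq_dec i (S c)). subst. rewrite Ee. auto.
        destruct (e i); simpl; auto. destruct (Nat.leb_spec i (S c)), (Nat.leb_spec i c); auto; lia. }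
      rewrite E in *. apply IHc; auto. lia. Qed.

Lemma prodR_const_1 N : prodR N (fun _ => 1) = 1.
Proof. rewrite prodR_const. apply pow1. Qed.

Lemma surv_InM d beta : (1 <= d)%nat -> IsDiscreteSurvival d (Fbar d beta) -> InM d (xb beta).
Proof. intros hd [p [Hp [Htot Hs]]].
  assert (Hnab : forall k j, (k <= d)%nat -> (j <= d - k)%nat -> 0 <= nab j (xb beta) k).
  { intros k j Hk Hj. set (e := fun i => (0 <? i) && (i <=? j)). set (kk := fun i => (j <? i) && (i <=? j + k)).
    assert (Ee : er e d = e).
    { apply functional_extensionality. intros i. unfold er, e. destruct (Nat.ltb_spec 0 i), (Nat.leb_spec i j), (Nat.leb_spec i d); simpl; auto; lia. }
    assert (Hdis : forall i, er e d i = true -> kk i = false).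
    { intros i. rewrite Ee. unfold e, kk. destruct (Nat.ltb_spec 0 i), (Nat.leb_spec i j), (Nat.ltb_spec j i); simpl; auto; lia. }
    pose proof (Phi_conv d beta p Hs d (le_n d) e kk Hdis) as HC. rewrite Ee in HC.
    unfold e, kk in HC. rewrite !cntd_interval in HC by lia.
    replace (Nat.min j d - Nat.min 0 d)%nat with j in HC by lia.
    replace (Nat.min (j + k) d - Nat.min j d)%nat with k in HC by lia.
    apply (lim_nonneg _ _ HC). intros. apply boxP_nonneg; auto. }
  split; [reflexivity|split].
  - pose proof (Hnab 0%nat 1%nat ltac:(lia) ltac:(lia)) as H01. rewrite nab_S, !nab_0 in H01. unfold xb in H01. simpl in H01.
    unfold xb. simpl. destruct (Rlt_or_le (beta 1%nat) 1) as [Hl|Hl]; auto. exfalso.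
    assert (Hb : beta 1%nat = 1) by lra.
    assert (Hneg : forall m, boxsum d (fun _ => O) m p <= 0).
    { intros m. set (nm := fun i => if i =? 1 then m else O).
      assert (HF : Fbar d beta nm = 1).
      { rewrite Fbar_G. unfold G.
        assert (HmL : maxL (Ln d nm) = m).
        { apply Nat.le_antisymm. apply maxL_le. intros y Hy. unfold Ln in Hy. apply in_map_iff in Hy. destruct Hy as [i [<- _]]. unfold nm. destruct (i =? 1); lia.
          pose proof (le_maxcoord d nm 1 ltac:(lia)). unfold nm in H at 1. simpl in H. exact H. }
        rewrite HmL. rewrite (prodR_ext m _ (fun _ => 1)). apply prodR_const_1.
        intros t Ht. rewrite <- cntd_cnt. rewrite (cntd_ext d _ (fun k => k =? 1)). rewrite cntd_single by lia. exact Hb.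
        intros k Hk. unfold nm. destruct (Nat.eqb_spec k 1). apply Nat.leb_le. lia. apply Nat.leb_gt. lia. }
      set (Pm := fun c t => if c =? 1 then t <? m else true).
      assert (Hsplit : forall M, boxsum d (fun _ => O) M p = boxP d Pm M p + boxsum d nm M p).
      { intros M. rewrite !boxsum_boxP. apply (boxP_add d M 1). lia.
        intros c' t Hc'. unfold Pm, nm. replace (c' =? 1) with false by (symmetry; apply Nat.eqb_neq; auto). auto.
        intros t. unfold Pm, nm. simpl. destruct (Nat.ltb_spec t m), (Nat.leb_spec m t); simpl; try lra; lia. }
      assert (Hu : Un_cv (fun M => boxP d Pm M p) 0).
      { pose proof (CV_minus _ _ _ _ Htot (Hs nm)) as HC. replace (1 - Fbar d beta nm) with 0 in HC by (rewrite HF; ring).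
        eapply Un_cv_ext. 2: exact HC. intros M. cbv beta. rewrite (Hsplit M). ring. }
      assert (Hg : Un_growing (fun M => boxP d Pm M p)) by (intros M; apply boxP_mono; auto).
      pose proof (growing_ineq _ _ Hg Hu m) as Hle. cbv beta in Hle.
      rewrite (Hsplit m). rewrite (boxsum_boxP d nm m p). rewrite (boxP_empty d m 1 (fun c t => nm c <=? t) p). lra. lia.
      intros t Ht. unfold nm. simpl. apply Nat.leb_gt. lia. }
    pose proof (lim_nonneg _ _ (CV_opp _ _ Htot)) as HH. 
    assert (- 1 >= 0) by (apply Rle_ge, HH; intros n; unfold opp_seq; specialize (Hneg n); lra). lra.
  - intros k j Hk Hj. rewrite nabla_nab. apply Hnab; auto.
Qed.

Theorem theorem3p2 (d : nat) (hd : (1 <= d)%nat) (beta : nat -> R) :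
  (IsDiscreteSurvival d (Fbar d beta) <->
     InM d (fun k => if Nat.eqb k 0 then 1 else beta k)) /\
  (InM d (fun k => if Nat.eqb k 0 then 1 else beta k) ->
     exists pt : nat -> R,
       WSGParams d pt /\
       Exchangeable d (WSG_surv d pt) /\
       forall n : nat -> nat, WSG_surv d pt n = Fbar d beta n).
Proof.
  change (fun k => if Nat.eqb k 0 then 1 else beta k) with (xb beta).
  split.
  - split; intros H. apply surv_InM; auto. apply InM_surv; auto.
  - intros HM. exists (ptb d beta). split; [apply WSG_params; auto|split].
    + intros sigma Hsig n. rewrite !WSG_Fbar. apply Fbar_exch; auto.
    + intros n. apply WSG_Fbar.
Qed.
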